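(* Let $\mathcal M\subseteq\bigcup_{K\ge1}\mathcal F_K\times\mathcal Q_K$ satisfy: (1) $K(F)<N$ for all $(F,Q)\in\mathcal M$; (2) for every $(F,Q)\in\mathcal M$, $\{F\}\times\mathcal Q_{K(F)}^{\mathrm{an}}\subseteq\mathcal M$. Then $\mathcal M$ is identifiable if and only if (a) for all $(F^1,Q^1),(F^2,Q^2)\in\mathcal M$, $F^1Q^1=F^2Q^2$ implies $\mathrm{co}(F^1)=\mathrm{co}(F^2)$, and (b) for every $(F,Q)\in\mathcal M$, with $K=K(F)$, the vectors $F_{\star 1}-F_{\star K},\dots,F_{\star K-1}-F_{\star K}$ are linearly independent.
   Context: Fix positive integers $M$ and $N$. For a positive integer $K$, $\mathcal F_K$ is the set of real $M\times K$ matrices with all entries in $[0,1]$, and $\mathcal Q_K$ is the set of real $K\times N$ matrices with entries in $[0,1]$ each of whose columns sums to $1$. $K(F)$ is the number of columns of $F$, $A_{\star j}$ the $j$-th column of $A$, $e_k$ the $k$-th standard basis vector. $\mathcal Q_K^{\mathrm{an}}$ is the set of $Q\in\mathcal Q_K$ such that for every $k$ there is $i$ with $Q_{\star i}=e_k$. For a matrix $A$, $\mathrm{co}(A)$ is the convex hull of the columns of $A$. $(F^1,Q^1)\sim(F^2,Q^2)$ means $F^1,F^2$ have the same number $K$ of columns and there is a permutation $\pi$ of $\{1,\dots,K\}$ with $F^2_{sk}=F^1_{s\pi(k)}$ and $Q^2_{ki}=Q^1_{\pi(k)i}$ for all $s,k,i$. $\mathcal M$ is identifiable if for all $(F^1,Q^1),(F^2,Q^2)\in\mathcal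 M$, $F^1Q^1=F^2Q^2$ implies $(F^1,Q^1)\sim(F^2,Q^2)$. *)

(* Defs.v *)
From HB Require Import structures.
From mathcomp Require Import all_boot all_order all_algebra.
From mathcomp Require Import reals.
Set Implicit Arguments. Unset Strict Implicit. Unset Printing Implicit Defensive.
Import Order.TTheory GRing.Theory Num.Theory.
Local Open Scope ring_scope.

Section Defs.
Variable R : realType.

Definition inFK (m K : nat) (F : 'M[R]_(m, K)) : Prop :=
  forall s k, 0 <= F s k <= 1.

Definition inQK (K n : nat) (Q : 'M[R]_(K, n)) : Prop :=
  (forall k i, 0 <= Q k i <= 1) /\ (forall i, \sum_(k < K) Q k i = 1).

Definition inQan (K n : nat) (Q : 'M[R]_(K, n)) : Prop :=
  inQK Q /\ forall k : 'I_K, exists i : 'I_n, col i Q = delta_mx k 0.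

Definition model_equiv (m n K1 K2 : nat)
  (F1 : 'M[R]_(m, K1)) (Q1 : 'M[R]_(K1, n))
  (F2 : 'M[R]_(m, K2)) (Q2 : 'M[R]_(K2, n)) : Prop :=
  K1 = K2 /\
  exists pi : 'I_K2 -> 'I_K1, bijective pi /\
    (forall s k, F2 s k = F1 s (pi k)) /\ (forall k i, Q2 k i = Q1 (pi k) i).

Definition identifiable (m n : nat)
  (mdl : forall K : nat, 'M[R]_(m, K) -> 'M[R]_(K, n) -> Prop) : Prop :=
  forall K1 (F1 : 'M[R]_(m, K1)) Q1 K2 (F2 : 'M[R]_(m, K2)) Q2,
    mdl K1 F1 Q1 -> mdl K2 F2 Q2 -> F1 *m Q1 = F2 *m Q2 ->
    model_equiv F1 Q1 F2 Q2.

Definition in_co (m K : nat) (A : 'M[R]_(m, K)) (x : 'cV[R]_m) : Prop :=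
  exists lam : 'I_K -> R, (forall k, 0 <= lam k) /\ \sum_(k < K) lam k = 1 /\
    x = \sum_(k < K) lam k *: col k A.

Definition lin_indep (m p : nat) (v : 'I_p -> 'cV[R]_m) : Prop :=
  forall c : 'I_p -> R, \sum_(i < p) c i *: v i = 0 -> forall i, c i = 0.

Definition diffs_indep (m K : nat) (F : 'M[R]_(m, K)) : Prop :=
  forall klast : 'I_K, (klast.+1 = K)%N ->
    lin_indep (fun i : 'I_K.-1 => col (widen_ord (leq_pred K) i) F - col klast F).

End Defs.

(* Main.v *)
Require Import Defs.
From HB Require Import structures.
From mathcomp Require Import all_boot all_order all_algebra.
From mathcomp Require Import reals.
Import Order.TTheory GRing.Theory Num.Theory.
Local Open Scope ring_scope.

Definition aff_indep (R : realType) (m K : nat) (A : 'M[R]_(m, K)) : Prop :=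
  forall d : 'I_K -> R, \sum_k d k = 0 ->
    (forall s, \sum_k d k * A s k = 0) -> forall k, d k = 0.

Arguments aff_indep {R m K}.

Lemma colsumE (R : realType) (m K : nat) (A : 'M[R]_(m, K)) (lam : 'I_K -> R) s :
  (\sum_k lam k *: col k A) s 0 = \sum_k lam k * A s k.
Proof. rewrite summxE; apply: eq_bigr => k _; by rewrite !mxE. Qed.

Lemma col_entry (R : realType) (m K : nat) (A : 'M[R]_(m, K)) k s : col k A s 0 = A s k.
Proof. by rewrite mxE. Qed.

Lemma in_coE (R : realType) (m K : nat) (A : 'M[R]_(m, K)) (x : 'cV[R]_m) lam :
  x = \sum_k lam k *: col k A <-> forall s, x s 0 = \sum_k lam k * A s k.
Proof.
split=> [-> s|H]; first by rewrite colsumE.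
apply/matrixP => s j; rewrite ord1 H colsumE //.
Qed.

Arguments in_coE {R m K A x lam}.
Arguments col_entry {R m K} A k s.
Arguments colsumE {R m K} A lam s.

Lemma sum_delta (R : realType) (K : nat) (k : 'I_K) :
  \sum_j ((j == k)%:R : R) = 1.
Proof.
rewrite (bigD1 k) //= eqxx big1 ?addr0 // => j /negbTE -> //.
Qed.

Lemma sum_deltaM (R : realType) (K : nat) (k : 'I_K) (x : 'I_K -> R) :
  \sum_j ((j == k)%:R * x j) = x k.
Proof.
rewrite (bigD1 k) //= eqxx mul1r big1 ?addr0 // => j /negbTE ->; by rewrite mul0r.
Qed.

Lemma diffs_aff (R : realType) (m K : nat) (F : 'M[R]_(m, K)) :
  (0 < K)%N -> diffs_indep F -> aff_indep F.
Proof.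
case: K F => [//|K] F _ H d sd Fd.
have Ew : forall i : 'I_K, widen_ord (leq_pred K.+1) i = widen_ord (leqnSn K) i.
  by move=> i; apply: val_inj.
have := H ord_max erefl (fun i => d (widen_ord (leqnSn K) i)).
move: sd; rewrite big_ord_recr /= => sd.
have Hz : forall i, d (widen_ord (leqnSn K) i) = 0.
  apply: H ord_max erefl _ _ => /=.
  apply/matrixP => s j; rewrite ord1 summxE mxE.
  have := Fd s; rewrite big_ord_recr /= => Fs.
  transitivity (\sum_(i < K) d (widen_ord (leqnSn K) i) * F s (widen_ord (leqnSn K) i)
     - (\sum_(i < K) d (widen_ord (leqnSn K) i)) * F s ord_max).
    rewrite mulr_suml -sumrB; apply: eq_bigr => i _.
    by rewrite !mxE Ew mulrBr.
  have -> : \sum_(i < K) d (widen_ord (leqnSn K) i) = - d ord_max.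
    by apply/eqP; rewrite -addr_eq0 sd.
  have -> : \sum_(i < K) d (widen_ord (leqnSn K) i) * F s (widen_ord (leqnSn K) i)
     = - (d ord_max * F s ord_max).
    by apply/eqP; rewrite -addr_eq0 Fs.
  by rewrite mulNr subrr.
move=> _ k.
case: (ltnP k K) => hk.
  have -> : k = widen_ord (leqnSn K) (Ordinal hk) by apply: val_inj.
  by rewrite Hz.
have -> : k = ord_max by apply: val_inj => /=; apply/eqP; rewrite eqn_leq hk -ltnS ltn_ord.
have : \sum_(i < K) d (widen_ord (leqnSn K) i) = 0 by rewrite big1.
move=> S0; move: sd; rewrite S0 add0r //.
Qed.

Lemma aff_diffs (R : realType) (m K : nat) (F : 'M[R]_(m, K)) :
  aff_indep F -> diffs_indep F.
Proof.
case: K F => [|K] F H klast Hk; first by case: klast Hk.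
have E : klast = ord_max by apply: val_inj; exact: (succn_inj Hk).
subst klast.
move=> c Hc i.
pose d (k : 'I_K.+1) := if unlift ord_max k is Some j then c j else - \sum_j c j.
have dw : forall j, d (widen_ord (leqnSn K) j) = c j.
  move=> j; have -> : widen_ord (leqnSn K) j = lift ord_max j by apply: val_inj; rewrite /= /bump leqNgt ltn_ord.
  by rewrite /d liftK.
have dm : d ord_max = - \sum_j c j by rewrite /d unlift_none.
have Ew : forall i : 'I_K, widen_ord (leq_pred K.+1) i = widen_ord (leqnSn K) i.
  by move=> i'; apply: val_inj.
rewrite -dw; apply: H.
  by rewrite big_ord_recr /= dm; under eq_bigr => j _ do rewrite dw; rewrite subrr.
move=> s; rewrite big_ord_recr /= dm; under eq_bigr => j _ do rewrite dw.
move/matrixP: Hc => /(_ s 0); rewrite summxE mxE => Hs.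
rewrite -[RHS]Hs mulNr mulr_suml -sumrB; apply: eq_bigr => j _.
by rewrite !mxE Ew mulrBr.
Qed.

Definition Qm (R : realType) (K n : nat) (w : 'I_K -> R) : 'M[R]_(K, n) :=
  \matrix_(k, i) if (i < K)%N then ((k : nat) == i)%:R else w k.

Arguments Qm {R K} n w.

Lemma le_sum_nonneg (R : realType) (K : nat) (w : 'I_K -> R) k :
  (forall k, 0 <= w k) -> w k <= \sum_j w j.
Proof.
move=> H; rewrite (bigD1 k) //= lerDl; apply: sumr_ge0 => j _; exact: H.
Qed.

Lemma Qm_an (R : realType) (K n : nat) (w : 'I_K -> R) :
  (K <= n)%N -> (forall k, 0 <= w k) -> \sum_k w k = 1 -> inQan (Qm n w).
Proof.
move=> Kn w0 w1; split; first split.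
- move=> k i; rewrite mxE; case: ifP => _.
    by case: eqP => _; rewrite ?ler01 ?lexx.
  by rewrite w0 -w1 le_sum_nonneg.
- move=> i; under eq_bigr => k _ do rewrite mxE.
  case hi: (i < K)%N; last by [].
  rewrite -[RHS](@sum_delta R K (Ordinal hi)); apply: eq_bigr => k _ //.
- move=> k; exists (widen_ord Kn k); apply/matrixP => a b.
  by rewrite ord1 !mxE /= ltn_ord eqxx andbT.
Qed.

Arguments Qm_an {R K n w}.

Lemma ident_aff (R : realType) (m n : nat)
  (mdl : forall K : nat, 'M[R]_(m, K) -> 'M[R]_(K, n) -> Prop) K (F : 'M[R]_(m, K)) Q :
  (forall K F Q, mdl K F Q -> forall Q' : 'M[R]_(K, n), inQan Q' -> mdl K F Q') ->
  identifiable mdl -> mdl K F Q -> (0 < K)%N -> (K < n)%N -> aff_indep F.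
Proof.
move=> Hcl Hid HQ K0 Kn d sd Fd k0.
case: (d k0 =P 0) => // nz; exfalso.
pose S := \sum_k `|d k|.
have dS : forall k, `|d k| <= S by move=> k; apply: le_sum_nonneg => j; exact: normr_ge0.
have S0 : 0 < S by apply: (lt_le_trans _ (dS k0)); rewrite normr_gt0; apply/eqP.
have K0R : (K%:R : R) != 0 by rewrite pnatr_eq0 -lt0n.
pose v k := (S + d k) / (K%:R * S).
have vE : forall k, v k = K%:R^-1 + d k / (K%:R * S).
  move=> k; rewrite /v mulrDl; congr (_ + _).
  by rewrite invfM mulrCA mulfV ?mulr1 // gt_eqF.
have v0 : forall k, 0 <= v k.
  move=> k; apply: divr_ge0; last by apply: mulr_ge0 => //; apply: ltW.
  by rewrite -lerBlDl sub0r lerNl; apply: le_trans (dS k); rewrite -normrN ler_norm.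
have v1 : \sum_k v k = 1.
  rewrite /v -mulr_suml big_split /= sd addr0 sumr_const card_ord -[S *+ K]mulr_natl.
  by rewrite mulfV // mulf_neq0 // gt_eqF.
have u0 : forall k : 'I_K, 0 <= K%:R^-1 :> R by move=> _; rewrite invr_ge0.
have u1 : \sum_(k < K) K%:R^-1 = 1 :> R.
  by rewrite sumr_const card_ord -[_ *+ K]mulr_natl mulfV.
have Kn' := ltnW Kn.
have H1 := Hcl _ _ _ HQ _ (Qm_an Kn' u0 u1).
have H2 := Hcl _ _ _ HQ _ (Qm_an Kn' v0 v1).
have EQ : F *m Qm n (fun _ => K%:R^-1) = F *m Qm n v.
  apply/matrixP => s i; rewrite !mxE.
  under eq_bigr => j _ do rewrite mxE.
  under [RHS]eq_bigr => j _ do rewrite mxE.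
  case: (i < K)%N => //.
  under [RHS]eq_bigr => j _ do rewrite vE mulrDr.
  rewrite big_split /= -[LHS]addr0; congr (_ + _).
  under eq_bigr => j _ do rewrite mulrA.
  rewrite -mulr_suml -[LHS](mul0r (K%:R * S)^-1); congr (_ * _).
  rewrite -[LHS](Fd s); apply: eq_bigr => j _; exact: mulrC.
have [_ [pi [_ [_ HQ2]]]] := Hid _ _ _ _ _ _ H1 H2 EQ.
have := HQ2 k0 (Ordinal Kn); rewrite !mxE /= ltnn vE => /eqP.
rewrite -subr_eq0 addrC addKr mulf_eq0 invr_eq0 mulf_eq0 (negbTE K0R) (gt_eqF S0) /= orbF.
by move/eqP.
Qed.

Lemma in_co_col (R : realType) (m K : nat) (A : 'M[R]_(m, K)) k : in_co A (col k A).
Proof.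
exists (fun j => (j == k)%:R); split; first by move=> j; case: (j == k).
split; first exact: sum_delta.
apply/(@in_coE _ _ _ A (col k A)) => s; rewrite sum_deltaM. by rewrite mxE.
Qed.

Lemma aff_col_inj (R : realType) (m K : nat) (A : 'M[R]_(m, K)) :
  aff_indep A -> injective (fun k => col k A).
Proof.
move=> H k l /= E; case: (k =P l) => // nkl; exfalso.
pose d (j : 'I_K) : R := (j == k)%:R - (j == l)%:R.
have Hd : d k = 0.
  apply: H.
    by rewrite sumrB !sum_delta subrr.
  move=> s; under eq_bigr => j _ do rewrite mulrBl.
  by rewrite sumrB !sum_deltaM -!(col_entry A _ s) E subrr.
move: Hd; rewrite /d eqxx; case: eqP => // _; rewrite subr0 => /eqP.
by rewrite oner_eq0.
Qed.

Lemma col_match (R : realType) (m KA KB : nat) (A : 'M[R]_(m, KA)) (B : 'M[R]_(m, KB)) :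
  aff_indep B -> (forall j, in_co B (col j A)) -> (forall l, in_co A (col l B)) ->
  forall l, exists j, col j A = col l B.
Proof.
move=> HB HA HBl l.
have [lam [lam0 [lam1 /in_coE Hl]]] := HBl l.
have : forall j, exists mu : 'I_KB -> R, (forall k, 0 <= mu k) /\ \sum_k mu k = 1 /\
   col j A = \sum_k mu k *: col k B by exact: HA.
move=> /fin_all_exists [mu Hmu].
have mu0 : forall j k, 0 <= mu j k by move=> j; case: (Hmu j).
have mu1 : forall j, \sum_k mu j k = 1 by move=> j; case: (Hmu j) => _ [].
have muA : forall j s, A s j = \sum_k mu j k * B s k.
  move=> j s; case: (Hmu j) => _ [_ /in_coE H]; by rewrite -H col_entry.
pose nu l' := \sum_j lam j * mu j l'.
have Hnu : forall l', nu l' = (l' == l)%:R.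
  move=> l'; apply/eqP; rewrite -subr_eq0; apply/eqP.
  apply: (HB (fun l' => nu l' - (l' == l)%:R)).
    rewrite sumrB sum_delta /nu exchange_big /=.
    under eq_bigr => j _ do rewrite -mulr_sumr mu1 mulr1.
    by rewrite lam1 subrr.
  move=> s; under eq_bigr => l'' _ do rewrite mulrBl.
  rewrite sumrB sum_deltaM.
  under eq_bigr => l'' _ do rewrite /nu mulr_suml.
  rewrite exchange_big /=.
  under eq_bigr => j _ do (under eq_bigr => k _ do rewrite -mulrA; rewrite -mulr_sumr -muA).
  by rewrite -(col_entry B l s) Hl subrr.
have : \sum_j lam j <> 0 by rewrite lam1; apply/eqP; exact: oner_neq0.
move/(psumr_neq0P (fun j _ => lam0 j)) => [j /andP [_ lj]].
exists j.
have mz : forall l', l' != l -> mu j l' = 0.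
  move=> l' nl; have := Hnu l'; rewrite (negbTE nl) /nu => S0.
  have := @psumr_eq0P R _ predT (fun j => lam j * mu j l')
     (fun j _ => mulr_ge0 (lam0 j) (mu0 j l')) S0 j isT.
  by move/eqP; rewrite mulf_eq0 (gt_eqF lj) /= => /eqP.
have ml : mu j l = 1.
  by rewrite -(mu1 j) (bigD1 l) //= big1 ?addr0 // => k /mz.
apply/matrixP => s b; rewrite ord1 !col_entry muA (bigD1 l) //= ml mul1r big1 ?addr0 //.
by move=> k /mz ->; rewrite mul0r.
Qed.

Arguments diffs_aff {R m K F}.
Arguments aff_diffs {R m K F}.
Arguments in_co_col {R m K} A k.
Arguments aff_col_inj {R m K A}.
Arguments col_match {R m KA KB A B}.

Lemma co_perm (R : realType) m K (F1 F2 : 'M[R]_(m, K)) (pi : 'I_K -> 'I_K) x :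
  bijective pi -> (forall s k, F2 s k = F1 s (pi k)) -> in_co F1 x -> in_co F2 x.
Proof.
move=> /bij_inj pinj HF [lam [l0 [l1 /in_coE Hx]]].
exists (fun k => lam (pi k)); split; first by move=> k.
split; first by rewrite -l1 [RHS](reindex_inj pinj).
apply/in_coE => s; rewrite Hx (reindex_inj pinj); apply: eq_bigr => k _; by rewrite HF.
Qed.

Theorem mainTheorem5 (R : realType) (m n : nat)
  (mdl : forall K : nat, 'M[R]_(m, K) -> 'M[R]_(K, n) -> Prop) :
  (0 < m)%N -> (0 < n)%N ->
  (* M is a subset of the union over K >= 1 of F_K x Q_K *)
  (forall K F Q, mdl K F Q -> (0 < K)%N /\ inFK F /\ inQK Q) ->
  (* (1) K(F) < N *)
  (forall K F Q, mdl K F Q -> (K < n)%N) ->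
  (* (2) {F} x Q_K^an is contained in M *)
  (forall K F Q, mdl K F Q -> forall Q' : 'M[R]_(K, n), inQan Q' -> mdl K F Q') ->
  identifiable mdl <->
  ((forall K1 (F1 : 'M[R]_(m, K1)) Q1 K2 (F2 : 'M[R]_(m, K2)) Q2,
       mdl K1 F1 Q1 -> mdl K2 F2 Q2 -> F1 *m Q1 = F2 *m Q2 ->
       forall x : 'cV[R]_m, in_co F1 x <-> in_co F2 x) /\
   (forall K (F : 'M[R]_(m, K)) Q, mdl K F Q -> diffs_indep F)).
Proof.
move=> m0 n0 Hdom Hn Hcl; split.
- move=> Hid; split.
  + move=> K1 F1 Q1 K2 F2 Q2 h1 h2 E x.
    have [eK [pi [bij [HF _]]]] := Hid _ _ _ _ _ _ h1 h2 E.
    subst K2.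
    have [pi' c1 c2] := bij.
    split; first exact: (@co_perm _ _ _ F1 F2 pi x bij HF).
    apply: (@co_perm _ _ _ F2 F1 pi' x).
      by exists pi.
    by move=> s k; rewrite HF c2.
  + move=> K F Q h; have [K0 _] := Hdom _ _ _ h.
    apply: aff_diffs; exact: (@ident_aff R m n mdl K F Q Hcl Hid h K0 (Hn _ _ _ h)).
- move=> [Ha Hb] K1 F1 Q1 K2 F2 Q2 h1 h2 E.
  have [K10 [_ [_ Q1s]]] := Hdom _ _ _ h1.
  have [K20 [_ [_ Q2s]]] := Hdom _ _ _ h2.
  have A1 := diffs_aff K10 (Hb _ _ _ h1).
  have A2 := diffs_aff K20 (Hb _ _ _ h2).
  have co := Ha _ _ _ _ _ _ h1 h2 E.
  have c12 : forall j, in_co F2 (col j F1) by move=> j; apply/co; exact: in_co_col.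
  have c21 : forall l, in_co F1 (col l F2) by move=> l; apply/co; exact: in_co_col.
  have [f Hf] := fin_all_exists (col_match A2 c12 c21).
  have [g Hg] := fin_all_exists (col_match A1 c21 c12).
  have finj : injective f.
    by move=> a b e; apply: (aff_col_inj A2); rewrite /= -Hf e Hf.
  have ginj : injective g.
    by move=> a b e; apply: (aff_col_inj A1); rewrite /= -Hg e Hg.
  have eK : K1 = K2.
    have := leq_card _ finj; have := leq_card _ ginj; rewrite !card_ord => a b.
    by apply/eqP; rewrite eqn_leq a b.
  subst K2.
  have HF2 : forall s k, F2 s k = F1 s (f k).
    by move=> s k; rewrite -(col_entry F2 k s) -Hf col_entry.
  split => //; exists f; split; first exact: injF_bij.
  split; first exact: HF2.
  have [f' fK f'K] := injF_bij finj.
  move=> k i.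
  suff H : forall j, Q1 j i = Q2 (f' j) i by rewrite H fK.
  move=> j; apply/eqP; rewrite -subr_eq0; apply/eqP; move: j.
  apply: (A1 (fun j => Q1 j i - Q2 (f' j) i)).
    rewrite sumrB Q1s.
    have e : \sum_k Q2 (f' k) i = \sum_k Q2 k i by rewrite [RHS](reindex_inj (can_inj f'K)).
    by rewrite e Q2s subrr.
  move=> s.
  have := congr1 (fun M : 'M[R]_(m, n) => M s i) E; rewrite !mxE => Es.
  have Es2 : \sum_k F2 s k * Q2 k i = \sum_j F1 s j * Q2 (f' j) i.
    rewrite (reindex_inj (can_inj f'K)) /=; apply: eq_bigr => j _; by rewrite HF2 f'K.
  under eq_bigr => j _ do rewrite mulrBl.
  rewrite sumrB; apply/eqP; rewrite subr_eq0; apply/eqP.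
  transitivity (\sum_j F1 s j * Q1 j i); first by apply: eq_bigr => j _; rewrite mulrC.
  rewrite Es Es2; apply: eq_bigr => j _; by rewrite mulrC.
Qed.
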